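(* $\mathcal{N}_{\mathbb{M}^{\mathrm{Club}}_\kappa}=\mathcal{I}_{\mathbb{M}^{\mathrm{Club}}_\kappa}$.
   Context: $\kappa$ is an uncountable regular cardinal with $\kappa=2^{<\kappa}$. $\mathbb{M}^{\mathrm{Club}}_\kappa$ consists of pruned $<\kappa$-closed trees $p\subseteq\kappa^{<\kappa}$, ordered by inclusion, such that every $s\in p$ has an extension $t\in p$ with $\mathrm{succ}(t,p)=\{\alpha<\kappa: t^\frown\alpha\in p\}$ club in $\kappa$ (such $t$ is club-splitting; $t^\frown\alpha$ is $t$ extended by $\alpha$), and for every branch $x\in[p]$ the set $\{\alpha<\kappa: x\restriction\alpha \text{ is club-splitting}\}$ is club. For a tree-forcing $\mathbb{P}$, $\mathcal{N}_\mathbb{P}$ is the family of $\mathbb{P}$-nowhere dense sets ($X$ such that every $p$ has $q\leq p$ with $[q]\cap X=\emptyset$) and $\mathcal{I}_\mathbb{P}$ the family of sets covered by $\kappa$ many $\mathbb{P}$-nowhere dense sets. *)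

(* Defs.v *)
(* kappa is modelled as a type K with a strict well-order lt
   of order type kappa; elements of K are the ordinals < kappa. *)
From Stdlib Require Import Wellfounded.

Section ClubMiller.
Variable K : Type.
Variable lt : K -> K -> Prop.

Definition le (a b : K) : Prop := a = b \/ lt a b.

Definition is_wellorder : Prop :=
  (forall a, ~ lt a a) /\
  (forall a b c, lt a b -> lt b c -> lt a c) /\
  (forall a b, lt a b \/ a = b \/ lt b a) /\
  well_founded lt.

Definition seg (a : K) : Type := {b : K | lt b a}.

(* the order type of K is a cardinal: no proper initial segment is
   equinumerous with K (no injection of K into a proper initial segment) *)
Definition is_cardinal_type : Prop :=
  forall (a : K) (f : K -> seg a), ~ (forall x y, f x = f y -> x = y).

Definition is_uncountable : Prop :=
  forall f : K -> nat, ~ (forall x y, f x = f y -> x = y).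

Definition is_regular : Prop :=
  forall (a : K) (f : seg a -> K), exists c, forall b, lt (f b) c.

Definition two_lt_kappa_eq_kappa : Prop :=
  forall a : K, exists g : (seg a -> bool) -> K, forall u v, g u = g v -> u = v.

(* kappa^{<kappa}: sequences s of length len s < kappa with values in kappa;
   vals s b = Some (s(b)) for b < len s and None otherwise *)
Record node : Type := Node {
  len : K;
  vals : K -> option K;
  vals_dom : forall b, lt b len <-> vals b <> None }.

Definition prefix (s t : node) : Prop :=
  le (len s) (len t) /\ forall b, lt b (len s) -> vals s b = vals t b.

Definition is_restr (x : K -> K) (a : K) (u : node) : Prop :=
  len u = a /\ forall b, lt b a -> vals u b = Some (x b).

Definition is_succ (a b : K) : Prop := lt a b /\ forall c, lt a c -> le b c.

Definition is_ext (t : node) (al : K) (u : node) : Prop :=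
  is_succ (len t) (len u) /\ prefix t u /\ vals u (len t) = Some al.

Definition succ_set (p : node -> Prop) (t : node) : K -> Prop :=
  fun al => exists u, p u /\ is_ext t al u.

Definition club (C : K -> Prop) : Prop :=
  (forall a, exists b, le a b /\ C b) /\
  (forall a, (exists b, lt b a) ->
     (forall b, lt b a -> exists c, lt b c /\ lt c a /\ C c) -> C a).

Definition is_tree (p : node -> Prop) : Prop :=
  (exists s, p s) /\ (forall s t, prefix s t -> p t -> p s).

Definition pruned (p : node -> Prop) : Prop :=
  forall s, p s -> exists t, p t /\ prefix s t /\ len s <> len t.

Definition is_union (a : K) (c : K -> node) (u : node) : Prop :=
  (forall b, lt b a -> prefix (c b) u) /\
  (forall d, lt d (len u) -> exists b, lt b a /\ lt d (len (c b))).

Definition lt_kappa_closed (p : node -> Prop) : Prop :=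
  forall (a : K) (c : K -> node),
    (forall b, lt b a -> p (c b)) ->
    (forall b b', lt b b' -> lt b' a -> prefix (c b) (c b')) ->
    forall u, is_union a c u -> p u.

Definition club_splitting (p : node -> Prop) (t : node) : Prop :=
  club (succ_set p t).

Definition branch (p : node -> Prop) (x : K -> K) : Prop :=
  forall a, exists u, p u /\ is_restr x a u.

Definition is_club_miller (p : node -> Prop) : Prop :=
  is_tree p /\ pruned p /\ lt_kappa_closed p /\
  (forall s, p s -> exists t, p t /\ prefix s t /\ club_splitting p t) /\
  (forall x, branch p x ->
     club (fun a => exists u, is_restr x a u /\ club_splitting p u)).

Definition nowhere_dense (X : (K -> K) -> Prop) : Prop :=
  forall p, is_club_miller p ->
    exists q, is_club_miller q /\ (forall s, q s -> p s) /\
      (forall x, branch q x -> ~ X x).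

Definition in_ideal (X : (K -> K) -> Prop) : Prop :=
  exists F : K -> (K -> K) -> Prop,
    (forall a, nowhere_dense (F a)) /\ (forall x, X x -> exists a, F a x).

End ClubMiller.

(* Main.v *)
Require Import Defs.
From Stdlib Require Import Classical ClassicalEpsilon FunctionalExtensionality ProofIrrelevance PropExtensionality Wellfounded.

Section Main.
Variable K : Type.
Variable lt : K -> K -> Prop.
Hypothesis Hwo : is_wellorder K lt.
Hypothesis Hunc : is_uncountable K.
Hypothesis Hreg : is_regular K lt.

Notation le := (Defs.le K lt).
Notation node := (Defs.node K lt).
Notation len := (Defs.len K lt).
Notation vals := (Defs.vals K lt).
Notation prefix := (Defs.prefix K lt).

Lemma lt_irrefl a : ~ lt a a.
Proof. destruct Hwo as [H _]; auto. Qed.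
Lemma lt_trans a b c : lt a b -> lt b c -> lt a c.
Proof. destruct Hwo as [_ [H _]]; eauto. Qed.
Lemma lt_tri a b : lt a b \/ a = b \/ lt b a.
Proof. destruct Hwo as [_ [_ [H _]]]; auto. Qed.
Lemma lt_wf : well_founded lt.
Proof. destruct Hwo as [_ [_ [_ H]]]; auto. Qed.

Lemma lt_asym a b : lt a b -> lt b a -> False.
Proof. intros. apply (lt_irrefl a). eapply lt_trans; eauto. Qed.

Lemma le_refl a : le a a.
Proof. left; auto. Qed.
Lemma le_trans a b c : le a b -> le b c -> le a c.
Proof. unfold Defs.le; intros [->|H1] [->|H2]; auto. right; eapply lt_trans; eauto. Qed.
Lemma le_lt_trans a b c : le a b -> lt b c -> lt a c.
Proof. intros [->|H] H2; auto. eapply lt_trans; eauto. Qed.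
Lemma lt_le_trans a b c : lt a b -> le b c -> lt a c.
Proof. intros H [->|H2]; auto. eapply lt_trans; eauto. Qed.
Lemma not_lt_le a b : ~ lt a b -> le b a.
Proof. intros H. destruct (lt_tri a b) as [h|[h|h]]; [tauto| left; auto | right; auto]. Qed.
Lemma le_not_lt a b : le a b -> ~ lt b a.
Proof. intros [->|H] H2. apply (lt_irrefl _ H2). apply (lt_asym _ _ H H2). Qed.
Lemma le_antisym a b : le a b -> le b a -> a = b.
Proof. intros [->|H] H2; auto. exfalso; apply (le_not_lt _ _ H2 H). Qed.
Lemma lt_le a b : lt a b -> le a b.
Proof. right; auto. Qed.

Definition ltdec (b a : K) : {lt b a} + {~ lt b a} := excluded_middle_informative _.

Lemma K_inh : inhabited K.
Proof.
  apply NNPP; intro H. apply (Hunc (fun _ => 0)). intros x. exfalso; apply H; constructor; auto.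
Qed.

Definition eps (P : K -> Prop) : K := epsilon K_inh P.
Lemma eps_spec (P : K -> Prop) : (exists x, P x) -> P (eps P).
Proof. apply epsilon_spec. Qed.

Lemma least (P : K -> Prop) : (exists a, P a) -> exists a, P a /\ forall b, P b -> le a b.
Proof.
  intros [a Ha]. revert Ha. pattern a. apply (well_founded_ind lt_wf). clear a.
  intros a IH Ha. destruct (classic (exists b, P b /\ lt b a)) as [[b [Hb Hba]]|Hn].
  - apply (IH b Hba Hb).
  - exists a. split; auto. intros b Hb. apply not_lt_le. intro. apply Hn; eauto.
Qed.

Definition z : K := eps (fun a => forall b, le a b).
Lemma z_le b : le z b.
Proof.
  revert b. unfold z. apply (eps_spec (fun a => forall b, le a b)). destruct K_inh as [k].
  destruct (least (fun _ => True)) as [a [_ Ha]]. exists k; auto.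
  exists a; auto.
Qed.

Lemma no_max a : exists b, lt a b.
Proof.
  destruct (classic (exists c, lt c a)) as [[c Hc]|Hn].
  - destruct (Hreg a (fun _ => a)) as [d Hd]. exists d. apply (Hd (exist _ c Hc)).
  - apply NNPP; intro H2. apply (Hunc (fun _ => 0)). intros x y _.
    assert (forall w, w = a).
    { intro w. destruct (lt_tri w a) as [h|[h|h]]; auto. exfalso; apply Hn; eauto.
      exfalso; apply H2; eauto. }
    rewrite (H x), (H y); auto.
Qed.

Lemma succ_ex a : exists b, is_succ K lt a b.
Proof.
  destruct (least (fun b => lt a b)) as [b [Hb Hl]]. apply no_max.
  exists b. split; auto.
Qed.

Definition sc (a : K) : K := eps (is_succ K lt a).
Lemma sc_spec a : is_succ K lt a (sc a).
Proof. apply (eps_spec (is_succ K lt a)), succ_ex. Qed.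
Lemma lt_sc a : lt a (sc a).
Proof. apply sc_spec. Qed.
Lemma sc_least a c : lt a c -> le (sc a) c.
Proof. apply sc_spec. Qed.
Lemma succ_unique a b : is_succ K lt a b -> b = sc a.
Proof.
  intros [H1 H2]. apply le_antisym. apply H2, lt_sc. apply sc_least; auto.
Qed.
Lemma lt_sc_le a c : lt c (sc a) -> le c a.
Proof.
  intros H. apply not_lt_le. intro H2. apply (le_not_lt _ _ (sc_least _ _ H2) H).
Qed.
Lemma lt_sc_mono a b : lt a b -> lt (sc a) (sc b).
Proof. intros H. eapply le_lt_trans. apply sc_least, H. apply lt_sc. Qed.

Fixpoint en (n : nat) : K := match n with O => z | S m => sc (en m) end.

Lemma en_all : ~ (exists w, forall n, lt (en n) w) -> forall w, exists m, w = en m.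
Proof.
  intros H w.
  assert (exists n, le w (en n)) as [n Hn].
  { apply NNPP; intro H2. apply H. exists w. intro n. apply NNPP; intro H3.
    apply H2. exists n. apply not_lt_le; auto. }
  revert w Hn. induction n; intros w Hn.
  - exists O. simpl in *. apply le_antisym; auto. apply z_le.
  - simpl in Hn. destruct Hn as [->|Hn]. exists (S n); auto.
    apply IHn. apply lt_sc_le; auto.
Qed.

Lemma en_mono n m : (n < m)%nat -> lt (en n) (en m).
Proof.
  induction 1. apply lt_sc. eapply lt_trans; eauto. apply lt_sc.
Qed.

Lemma en_inj n m : en n = en m -> n = m.
Proof.
  intros H. destruct (PeanoNat.Nat.lt_trichotomy n m) as [h|[h|h]]; auto;
  apply en_mono in h; rewrite H in h; exfalso; eapply lt_irrefl; eauto.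
Qed.

Lemma en_bounded : exists w, forall n, lt (en n) w.
Proof.
  apply NNPP; intro H. pose proof (en_all H) as Hall.
  apply (Hunc (fun w => proj1_sig (constructive_indefinite_description _ (Hall w)))).
  intros x y E.
  destruct (constructive_indefinite_description _ (Hall x)) as [m1 H1].
  destruct (constructive_indefinite_description _ (Hall y)) as [m2 H2]. simpl in E. subst. auto.
Qed.

Lemma omega_bound (d : nat -> K) : exists c, forall n, lt (d n) c.
Proof.
  destruct (least _ en_bounded) as [w [Hw Hl]].
  assert (Hseg : forall k, lt k w -> exists n, k = en n).
  { intros k Hk. apply NNPP; intro H.
    assert (forall n, lt (en n) k).
    { induction n. simpl. destruct (z_le k) as [E|E]; auto. exfalso; apply H; exists O; auto.
      simpl. destruct (sc_least _ _ IHn) as [E|E]; auto. exfalso; apply H; exists (S n); auto. }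
    apply (le_not_lt _ _ (Hl k H0) Hk). }
  pose (f := fun (b : seg K lt w) =>
     d (proj1_sig (constructive_indefinite_description _ (Hseg (proj1_sig b) (proj2_sig b))))).
  destruct (Hreg w f) as [c Hc]. exists c. intro n.
  specialize (Hc (exist _ (en n) (Hw n))). unfold f in Hc. simpl in Hc.
  destruct (constructive_indefinite_description _ _) as [m Hm]. simpl in Hc.
  apply en_inj in Hm. subst; auto.
Qed.

Lemma seg_bound (a : K) (f : K -> K) : exists c, forall b, lt b a -> lt (f b) c.
Proof.
  destruct (Hreg a (fun b => f (proj1_sig b))) as [c Hc]. exists c.
  intros b Hb. apply (Hc (exist _ b Hb)).
Qed.


Definition get (d : K) (o : option K) : K := match o with Some v => v | None => d end.

Lemma node_ext (s t : node) : len s = len t -> (forall b, vals s b = vals t b) -> s = t.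
Proof.
  destruct s as [l1 v1 d1], t as [l2 v2 d2]; simpl; intros E H. subst l2.
  assert (v1 = v2) by (apply functional_extensionality; auto). subst v2.
  f_equal. apply proof_irrelevance.
Qed.

Definition restr (x : K -> K) (a : K) : node.
  refine (Node K lt a (fun b => if ltdec b a then Some (x b) else None) _).
  intro b; destruct (ltdec b a); split; intros; try congruence; tauto.
Defined.

Lemma len_restr x a : len (restr x a) = a.
Proof. reflexivity. Qed.
Lemma vals_restr_lt x a b : lt b a -> vals (restr x a) b = Some (x b).
Proof. intros H; simpl; destruct (ltdec b a); tauto. Qed.
Lemma vals_restr_ge x a b : ~ lt b a -> vals (restr x a) b = None.
Proof. intros H; simpl; destruct (ltdec b a); tauto. Qed.

Lemma restr_eq x y a : (forall b, lt b a -> x b = y b) -> restr x a = restr y a.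
Proof.
  intros H. apply node_ext; auto. intros b; simpl. destruct (ltdec b a); auto. rewrite H; auto.
Qed.

Definition ext (d : K) (s : node) : K -> K := fun b => get d (vals s b).

Lemma vals_some (s : node) b : lt b (len s) -> vals s b = Some (ext z s b).
Proof.
  intros H. unfold ext. apply (vals_dom K lt s b) in H. destruct (vals s b); simpl; congruence.
Qed.
Lemma vals_none (s : node) b : ~ lt b (len s) -> vals s b = None.
Proof.
  intros H. destruct (vals s b) eqn:E; auto. exfalso; apply H. apply (vals_dom K lt s b). congruence.
Qed.

Lemma ext_d d1 d2 (s : node) b : lt b (len s) -> ext d1 s b = ext d2 s b.
Proof.
  intros H. unfold ext. apply (vals_dom K lt s b) in H. destruct (vals s b); simpl; congruence.
Qed.

Lemma restr_ext (s : node) : restr (ext z s) (len s) = s.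
Proof.
  apply node_ext; auto. intros b. destruct (ltdec b (len s)).
  rewrite vals_restr_lt, vals_some; auto.
  rewrite vals_restr_ge, vals_none; auto.
Qed.

Lemma node_restr (s : node) : exists x, s = restr x (len s).
Proof. exists (ext z s). symmetry; apply restr_ext. Qed.

Lemma is_restr_iff x a u : is_restr K lt x a u <-> u = restr x a.
Proof.
  split.
  - intros [H1 H2]. subst a. apply node_ext; auto. intros b. destruct (ltdec b (len u)).
    rewrite vals_restr_lt; auto. rewrite vals_restr_ge, vals_none; auto.
  - intros ->. split; auto. intros; apply vals_restr_lt; auto.
Qed.

Lemma prefix_restr x a b : le a b -> prefix (restr x a) (restr x b).
Proof.
  intros H. split; auto. intros c Hc. simpl in Hc. rewrite !vals_restr_lt; auto. eapply lt_le_trans; eauto.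
Qed.

Lemma prefix_iff (s : node) x b : prefix s (restr x b) <-> le (len s) b /\ s = restr x (len s).
Proof.
  split.
  - intros [H1 H2]. split; auto. apply node_ext; auto. intros c. destruct (ltdec c (len s)).
    rewrite H2, !vals_restr_lt; auto. eapply lt_le_trans; eauto.
    rewrite vals_restr_ge, vals_none; auto.
  - intros [H1 ->]. apply prefix_restr; auto.
Qed.

Lemma prefix_iff' (s t : node) : prefix s t <-> le (len s) (len t) /\ s = restr (ext z t) (len s).
Proof. rewrite <- (restr_ext t) at 1. rewrite prefix_iff. simpl. tauto. Qed.

Lemma prefix_refl (s : node) : prefix s s.
Proof. split. apply le_refl. auto. Qed.

Lemma prefix_trans (s t u : node) : prefix s t -> prefix t u -> prefix s u.
Proof.
  intros [H1 H2] [H3 H4]. split. eapply le_trans; eauto.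
  intros b Hb. rewrite H2, H4; auto. eapply lt_le_trans; eauto.
Qed.

Lemma prefix_len_eq (s t : node) : prefix s t -> len s = len t -> s = t.
Proof.
  intros [H1 H2] E. apply node_ext; auto. intros b. destruct (ltdec b (len s)); auto.
  rewrite !vals_none; auto. rewrite <- E; auto.
Qed.

Lemma prefix_comparable (s t u : node) : prefix s u -> prefix t u -> prefix s t \/ prefix t s.
Proof.
  intros [H1 H2] [H3 H4]. destruct (lt_tri (len s) (len t)) as [h|[h|h]].
  - left. split. right; auto. intros b Hb. rewrite H2, H4; auto. eapply lt_trans; eauto.
  - left. split. left; auto. intros b Hb. rewrite H2, H4; auto. rewrite <- h; auto.
  - right. split. right; auto. intros b Hb. rewrite H2, H4; auto. eapply lt_trans; eauto.
Qed.

Lemma restr_restr x a b : le a b -> restr (ext z (restr x b)) a = restr x a.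
Proof.
  intros H. apply restr_eq. intros c Hc. unfold ext. rewrite vals_restr_lt; auto.
  eapply lt_le_trans; eauto.
Qed.

Definition upd (x : K -> K) (a g : K) : K -> K := fun b => if ltdec b a then x b else g.

Definition snoc (s : node) (g : K) : node := restr (upd (ext z s) (len s) g) (sc (len s)).

Lemma len_snoc s g : len (snoc s g) = sc (len s).
Proof. reflexivity. Qed.

Lemma snoc_restr x a g : snoc (restr x a) g = restr (upd x a g) (sc a).
Proof.
  unfold snoc. simpl len. apply restr_eq. intros b Hb. unfold upd. destruct (ltdec b a); auto.
  unfold ext. rewrite vals_restr_lt; auto.
Qed.

Lemma snoc_restr' x a : snoc (restr x a) (x a) = restr x (sc a).
Proof.
  rewrite snoc_restr. apply restr_eq. intros b Hb. unfold upd. destruct (ltdec b a); auto.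
  apply lt_sc_le in Hb. destruct Hb; subst; tauto.
Qed.

Lemma restr_upd x a g : restr (upd x a g) a = restr x a.
Proof. apply restr_eq. intros b Hb. unfold upd. destruct (ltdec b a); tauto. Qed.

Lemma is_ext_iff t g u : is_ext K lt t g u <-> u = snoc t g.
Proof.
  destruct (node_restr t) as [x Ht]. rewrite Ht, snoc_restr. split.
  - intros [H1 [H2 H3]]. apply succ_unique in H1. simpl in H1.
    rewrite <- (restr_ext u). rewrite H1. apply restr_eq. intros b Hb. unfold upd.
    apply lt_sc_le in Hb. simpl in *. destruct (ltdec b (len t)).
    + destruct H2 as [_ H2]. specialize (H2 b). rewrite len_restr, vals_restr_lt in H2; auto.
      unfold ext. rewrite <- H2; auto.
    + destruct Hb as [->|Hb]; [|tauto]. unfold ext. simpl in H3. rewrite H3; auto.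
  - intros ->. split. rewrite !len_restr. apply sc_spec.
    split. rewrite <- (restr_upd x (len t) g) at 1. apply prefix_restr. apply lt_le, lt_sc.
    rewrite len_restr, vals_restr_lt. unfold upd. destruct (ltdec (len t) (len t)); auto.
    exfalso; eapply lt_irrefl; eauto. apply lt_sc.
Qed.

Lemma succ_set_iff p t g : succ_set K lt p t g <-> p (snoc t g).
Proof.
  unfold succ_set. split.
  - intros [u [Hu He]]. apply is_ext_iff in He. subst; auto.
  - intros H. exists (snoc t g). split; auto. apply is_ext_iff; auto.
Qed.

Lemma prefix_snoc t g : prefix t (snoc t g).
Proof.
  destruct (node_restr t) as [x Ht]. rewrite Ht, snoc_restr.
  rewrite <- (restr_upd x (len t) g) at 1. apply prefix_restr. apply lt_le, lt_sc.
Qed.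

Lemma snoc_inj t g g' : snoc t g = snoc t g' -> g = g'.
Proof.
  intros H. assert (vals (snoc t g) (len t) = vals (snoc t g') (len t)) by (rewrite H; auto).
  unfold snoc in H0. rewrite !vals_restr_lt in H0 by apply lt_sc. unfold upd in H0.
  destruct (ltdec (len t) (len t)). exfalso; eapply lt_irrefl; eauto. congruence.
Qed.

Lemma ord_class a : (exists b, a = sc b) \/ (forall b, lt b a -> lt (sc b) a).
Proof.
  destruct (classic (exists b, lt b a /\ ~ lt (sc b) a)) as [[b [H1 H2]]|H].
  - left. exists b. apply le_antisym. apply not_lt_le; auto. apply sc_least; auto.
  - right. intros b Hb. apply NNPP; intro; apply H; eauto.
Qed.

Lemma tree_prefix p s t : is_tree K lt p -> p t -> prefix s t -> p s.
Proof. intros [_ H] Ht Hp. eapply H; eauto. Qed.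

Lemma tree_restr p x a b : is_tree K lt p -> le a b -> p (restr x b) -> p (restr x a).
Proof. intros Ht H Hp. eapply tree_prefix; eauto. apply prefix_restr; auto. Qed.

Lemma closed_restr p x a : lt_kappa_closed K lt p ->
  (forall b, lt b a -> lt (sc b) a) -> (forall b, lt b a -> p (restr x b)) -> p (restr x a).
Proof.
  intros Hc Hl Hp. apply (Hc a (fun b => restr x b)); auto.
  - intros b b' H1 H2. apply prefix_restr, lt_le; auto.
  - split. intros b Hb. apply prefix_restr, lt_le; auto.
    intros d Hd. simpl in Hd. exists (sc d). split; auto. apply lt_sc.
Qed.

Lemma one_step p t : is_tree K lt p -> pruned K lt p -> p t -> exists g, p (snoc t g).
Proof.
  intros Ht Hp H. destruct (Hp t H) as [u [Hu [Hpre Hne]]].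
  destruct (node_restr u) as [x Hx]. rewrite Hx in Hpre. apply prefix_iff in Hpre as [Hl Et].
  destruct Hl as [E|Hl]; [tauto|].
  exists (x (len t)). assert (p (restr x (sc (len t)))).
  { apply (tree_restr p x _ (len u)); auto. apply sc_least; auto. rewrite <- Hx; auto. }
  rewrite <- snoc_restr', <- Et in H0. auto.
Qed.

Lemma branch_iff p x : branch K lt p x <-> forall a, p (restr x a).
Proof.
  split.
  - intros H a. destruct (H a) as [u [Hu Hr]]. apply is_restr_iff in Hr. subst; auto.
  - intros H a. exists (restr x a). split; auto. apply is_restr_iff; auto.
Qed.

Definition e0 : node := restr (fun _ => z) z.
Lemma len_z (s : node) : len s = z -> s = e0.
Proof.
  intros H. unfold e0. apply node_ext; auto. intros b. rewrite vals_none, vals_restr_ge; auto.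
  intro h; eapply le_not_lt. apply z_le. eauto.
  rewrite H. intro h; eapply le_not_lt. apply z_le. eauto.
Qed.
Lemma tree_e0 p : is_tree K lt p -> p e0.
Proof.
  intros Ht. pose proof Ht as [[s Hs] _]. eapply tree_prefix; eauto.
  split. apply z_le. intros b Hb. exfalso; eapply le_not_lt. apply z_le. eauto.
Qed.

Lemma branch_exists p s : is_tree K lt p -> pruned K lt p -> lt_kappa_closed K lt p -> p s ->
  exists x, (forall a, p (restr x a)) /\ restr x (len s) = s.
Proof.
  intros Ht Hp Hc Hs.
  pose (ch := fun t => eps (fun g => p (snoc t g))).
  pose (F := fun (b : K) (f : forall c, lt c b -> K) =>
     if ltdec b (len s) then ext z s b
     else ch (restr (fun c => match ltdec c b with left h => f c h | right _ => z end) b)).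
  pose (x := Fix lt_wf (fun _ => K) F).
  assert (Hx : forall b, x b = if ltdec b (len s) then ext z s b else ch (restr x b)).
  { intros b. unfold x at 1. rewrite Fix_eq.
    - unfold F at 1. destruct (ltdec b (len s)); auto. f_equal. apply restr_eq.
      intros c Hc'. destruct (ltdec c b); tauto.
    - intros b0 f g H. unfold F. destruct (ltdec b0 (len s)); auto. f_equal. apply restr_eq.
      intros c _. destruct (ltdec c b0); auto. }
  assert (Es : restr x (len s) = s).
  { rewrite <- (restr_ext s) at 2. apply restr_eq. intros b Hb. rewrite Hx.
    destruct (ltdec b (len s)); tauto. }
  exists x. split; auto.
  intros a. pattern a. apply (well_founded_ind lt_wf). clear a. intros a IH.
  destruct (ltdec (len s) a) as [Hl|Hl].
  - destruct (ord_class a) as [[b ->]|Hlim].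
    + assert (le (len s) b) by (apply lt_sc_le; auto).
      rewrite <- snoc_restr'. rewrite Hx. destruct (ltdec b (len s)).
      exfalso; eapply le_not_lt; eauto.
      unfold ch. apply (eps_spec (fun g => p (snoc (restr x b) g))).
      apply one_step; auto. apply IH. apply lt_sc.
    + apply closed_restr; auto.
  - apply not_lt_le in Hl. eapply tree_restr; eauto. rewrite Es; auto.
Qed.

Lemma branch_exists' p s : is_tree K lt p -> pruned K lt p -> lt_kappa_closed K lt p -> p s ->
  exists x, branch K lt p x /\ restr x (len s) = s.
Proof.
  intros. destruct (branch_exists p s) as [x [Hb1 Hb2]]; auto. exists x. split; auto.
  apply branch_iff; auto.
Qed.


Notation club := (Defs.club K lt).

Lemma club_ext (C D : K -> Prop) : (forall a, C a <-> D a) -> club C -> club D.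
Proof.
  intros E [H1 H2]. split.
  - intros a. destruct (H1 a) as [b [Hb Cb]]. exists b. split; auto. apply E; auto.
  - intros a Ha Hc. apply E. apply H2; auto. intros b Hb. destruct (Hc b Hb) as [c [? [? ?]]].
    exists c. split; auto. split; auto. apply E; auto.
Qed.

Lemma club_gt C : club C -> forall a, exists b, lt a b /\ C b.
Proof.
  intros [H _] a. destruct (H (sc a)) as [b [Hb Cb]]. exists b. split; auto.
  eapply lt_le_trans. apply lt_sc. auto.
Qed.

Lemma club_two C : club C -> exists a b, C a /\ C b /\ a <> b.
Proof.
  intros H. destruct (club_gt C H z) as [a [_ Ha]]. destruct (club_gt C H a) as [b [Hab Hb]].
  exists a, b. split; auto. split; auto. intro E; subst; eapply lt_irrefl; eauto.
Qed.

Lemma club_inter (a : K) (C0 : K -> Prop) (C : K -> K -> Prop) :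
  club C0 -> (forall b, lt b a -> club (C b)) ->
  club (fun c => C0 c /\ forall b, lt b a -> C b c).
Proof.
  intros H0 HC. split.
  - intros a0.
    pose (nb := fun b c => eps (fun e => lt c e /\ C b e)).
    pose (n0 := fun c => eps (fun e => lt c e /\ C0 e)).
    assert (Hnb : forall b c, lt b a -> lt c (nb b c) /\ C b (nb b c)).
    { intros b c Hb. apply (eps_spec (fun e => lt c e /\ C b e)). apply club_gt; auto. }
    assert (Hn0 : forall c, lt c (n0 c) /\ C0 (n0 c)).
    { intros c. apply (eps_spec (fun e => lt c e /\ C0 e)). apply club_gt; auto. }
    pose (step := fun c => eps (fun c' => lt (n0 c) c' /\ forall b, lt b a -> lt (nb b c) c')).
    assert (Hstep : forall c, lt (n0 c) (step c) /\ forall b, lt b a -> lt (nb b c) (step c)).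
    { intros c. apply (eps_spec (fun c' => lt (n0 c) c' /\ forall b, lt b a -> lt (nb b c) c')).
      destruct (seg_bound a (fun b => nb b c)) as [c1 Hc1].
      destruct (ltdec (n0 c) c1) as [h|h].
      - exists c1; auto.
      - exists (sc (n0 c)). split. apply lt_sc. intros b Hb. eapply lt_le_trans. apply Hc1; auto.
        eapply le_trans. apply not_lt_le; eauto. apply lt_le, lt_sc. }
    pose (d := fun n => Nat.iter n step a0).
    destruct (least _ (omega_bound d)) as [L [HL HLl]].
    assert (Hkey : forall b', lt b' L -> exists n, le b' (d n)).
    { intros b' Hb'. apply NNPP; intro Hn. assert (forall n, lt (d n) b').
      { intros n. apply NNPP; intro h. apply Hn. exists n. apply not_lt_le; auto. }
      apply (le_not_lt _ _ (HLl _ H) Hb'). }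
    exists L. split. apply lt_le. apply (HL O). split.
    + apply (proj2 H0). exists (d O); auto. intros b' Hb'. destruct (Hkey b' Hb') as [n Hn].
      exists (n0 (d n)). split. eapply le_lt_trans; eauto. apply Hn0. split.
      eapply lt_trans. apply Hstep. apply (HL (S n)). apply Hn0.
    + intros b Hb. apply (proj2 (HC b Hb)). exists (d O); auto. intros b' Hb'.
      destruct (Hkey b' Hb') as [n Hn].
      exists (nb b (d n)). split. eapply le_lt_trans; eauto. apply Hnb; auto. split.
      eapply lt_trans. apply Hstep; auto. apply (HL (S n)). apply Hnb; auto.
  - intros c Hc Hcl. split.
    + apply (proj2 H0); auto. intros b Hb. destruct (Hcl b Hb) as [e [? [? [? ?]]]]. eauto.
    + intros b Hb. apply (proj2 (HC b Hb)); auto. intros b' Hb'.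
      destruct (Hcl b' Hb') as [e [? [? [? ?]]]]. eauto.
Qed.

Lemma club_tail a : club (fun c => le a c).
Proof.
  split.
  - intros a0. destruct (lt_tri a a0) as [h|[h|h]]. exists a0; split; [apply le_refl|apply lt_le; auto].
    exists a0; subst; split; apply le_refl. exists a; split; [apply lt_le; auto| apply le_refl].
  - intros c [b Hb] H. destruct (H b Hb) as [e [_ [Hec He]]]. apply lt_le. eapply le_lt_trans; eauto.
Qed.

Lemma club_inter2 (C D : K -> Prop) : club C -> club D -> club (fun c => C c /\ D c).
Proof.
  intros HC HD. apply (club_ext (fun c => C c /\ forall b, lt b (sc z) -> D c)).
  - intros c. split. intros [h1 h2]. split; auto. apply (h2 z), lt_sc. intros [h1 h2]; split; auto.
  - apply (club_inter (sc z) C (fun _ => D)); auto.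
Qed.


Notation cond := (is_club_miller K lt).
Definition splits (p : node -> Prop) (t : node) : Prop := club (fun g => p (snoc t g)).
Definition normal (p : node -> Prop) : Prop :=
  forall t, p t -> splits p t \/ (forall g g', p (snoc t g) -> p (snoc t g') -> g = g').
Definition ncond p := cond p /\ normal p.

Lemma cs_iff p t : club_splitting K lt p t <-> splits p t.
Proof.
  unfold club_splitting, splits. split; apply club_ext; intros g; rewrite succ_set_iff; tauto.
Qed.

Lemma cond_intro p : is_tree K lt p -> pruned K lt p -> lt_kappa_closed K lt p ->
  (forall x, (forall a, p (restr x a)) -> club (fun a => splits p (restr x a))) -> cond p.
Proof.
  intros Ht Hp Hc Hb. split; auto. split; auto. split; auto. split.
  - intros s Hs. destruct (branch_exists p s) as [x [Hx Es]]; auto.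
    destruct (proj1 (Hb x Hx) (len s)) as [a [Ha Hs2]].
    exists (restr x a). split; auto. split. rewrite <- Es at 1. apply prefix_restr; auto.
    apply cs_iff; auto.
  - intros x Hx. rewrite branch_iff in Hx. apply (club_ext (fun a => splits p (restr x a))); auto.
    intros a. split.
    + intros H. exists (restr x a). split. apply is_restr_iff; auto. apply cs_iff; auto.
    + intros [u [Hu Hs]]. apply is_restr_iff in Hu. subst. apply cs_iff; auto.
Qed.

Lemma cond_tree p : cond p -> is_tree K lt p.
Proof. intros H; apply H. Qed.
Lemma cond_pruned p : cond p -> pruned K lt p.
Proof. intros H; apply H. Qed.
Lemma cond_closed p : cond p -> lt_kappa_closed K lt p.
Proof. intros H; apply H. Qed.
Lemma cond_branch p x : cond p -> (forall a, p (restr x a)) -> club (fun a => splits p (restr x a)).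
Proof.
  intros H Hx. destruct H as [_ [_ [_ [_ H]]]]. rewrite <- branch_iff in Hx.
  apply (club_ext (fun a => exists u, is_restr K lt x a u /\ club_splitting K lt p u)); auto.
  intros a. split.
  - intros [u [Hu Hs]]. apply is_restr_iff in Hu. subst. apply cs_iff; auto.
  - intros Hs. exists (restr x a). split. apply is_restr_iff; auto. apply cs_iff; auto.
Qed.
Lemma cond_one_step p t : cond p -> p t -> exists g, p (snoc t g).
Proof. intros H Ht. apply one_step; auto. apply cond_tree; auto. apply cond_pruned; auto. Qed.

Lemma unique_not_split p t : (forall g g', p (snoc t g) -> p (snoc t g') -> g = g') -> ~ splits p t.
Proof.
  intros H Hs. destruct (club_two _ Hs) as [a [b [Ha [Hb E]]]]. apply E; auto.
Qed.

Lemma mono_split (A B : node -> Prop) t : normal B -> (forall u, A u -> B u) -> B t ->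
  splits A t -> splits B t.
Proof.
  intros HB HAB Bt HA. destruct (HB t Bt) as [h|h]; auto.
  exfalso. apply (unique_not_split A t); auto.
Qed.

Lemma inter_ncond (a : K) (T0 : node -> Prop) (T : K -> node -> Prop) :
  ncond T0 -> (forall b, lt b a -> ncond (T b)) ->
  (forall b, lt b a -> forall t, T b t -> T0 t) ->
  (forall b b', lt b b' -> lt b' a -> forall t, T b' t -> T b t) ->
  ncond (fun t => T0 t /\ forall b, lt b a -> T b t).
Proof.
  intros [C0 N0] HT Hsub Hdec.
  set (I := fun t => T0 t /\ forall b, lt b a -> T b t).
  assert (Hall : forall t, I t -> splits T0 t -> (forall b, lt b a -> splits (T b) t) -> splits I t).
  { intros t It H0 Hb. unfold splits, I. apply (club_inter a (fun g => T0 (snoc t g))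
      (fun b g => T b (snoc t g))); auto. }
  assert (Hnot : forall t, I t -> ~ (splits T0 t /\ forall b, lt b a -> splits (T b) t) ->
     (exists g, I (snoc t g)) /\ (forall g g', I (snoc t g) -> I (snoc t g') -> g = g')).
  { intros t [It0 Itb] Hn.
    destruct (classic (splits T0 t)) as [Hs0|Hs0].
    - assert (exists b0, lt b0 a /\ ~ splits (T b0) t) as [b0 [Hb0 Hns]].
      { apply NNPP; intro H. apply Hn. split; auto. intros b Hb. apply NNPP; intro; apply H; eauto. }
      destruct (HT b0 Hb0) as [Cb Nb]. destruct (Nb t (Itb b0 Hb0)) as [h|Hu]; [tauto|].
      destruct (cond_one_step _ t Cb (Itb b0 Hb0)) as [g0 Hg0].
      split.
      + exists g0. split. apply (Hsub b0); auto. intros b Hb.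
        destruct (lt_tri b b0) as [h|[h|h]].
        * apply (Hdec b b0); auto.
        * subst; auto.
        * destruct (cond_one_step _ t (proj1 (HT b Hb)) (Itb b Hb)) as [g Hg].
          assert (g = g0). { apply Hu; auto. apply (Hdec b0 b); auto. }
          subst; auto.
      + intros g g' [_ H1] [_ H2]. apply Hu; auto.
    - destruct (N0 t It0) as [h|Hu]; [tauto|].
      destruct (cond_one_step _ t C0 It0) as [g0 Hg0]. split.
      + exists g0. split; auto. intros b Hb.
        destruct (cond_one_step _ t (proj1 (HT b Hb)) (Itb b Hb)) as [g Hg].
        assert (g = g0). { apply Hu; auto. apply (Hsub b); auto. }
        subst; auto.
      + intros g g' [H1 _] [H2 _]. apply Hu; auto. }
  assert (Hstep : forall t, I t -> exists g, I (snoc t g)).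
  { intros t It. destruct (classic (splits T0 t /\ forall b, lt b a -> splits (T b) t)) as [[h1 h2]|h].
    - destruct (club_gt _ (Hall t It h1 h2) z) as [g [_ Hg]]. eauto.
    - apply (Hnot t It h). }
  assert (Hsp : forall t, I t -> (splits I t <-> (splits T0 t /\ forall b, lt b a -> splits (T b) t))).
  { intros t It. split.
    - intros Hs. split. apply (mono_split I T0); auto. intros u Iu; apply Iu. apply It.
      intros b Hb. apply (mono_split I (T b)); auto. apply (HT b Hb). intros u Iu; apply Iu; auto.
      apply It; auto.
    - intros [h1 h2]; auto. }
  split.
  - apply cond_intro.
    + split. exists e0. split. apply tree_e0, cond_tree; auto. intros b Hb. apply tree_e0, cond_tree, HT; auto.
      intros s t Hst [Ht0 Htb]. split. eapply tree_prefix; eauto. apply cond_tree; auto.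
      intros b Hb. eapply tree_prefix; eauto. apply cond_tree, HT; auto.
    + intros s Is. destruct (Hstep s Is) as [g Hg]. exists (snoc s g). split; auto. split.
      apply prefix_snoc. rewrite len_snoc. intro E. apply (lt_irrefl (len s)). rewrite E at 2. apply lt_sc.
    + intros a0 c Hc Hch u Hu. split.
      * apply (cond_closed _ C0 a0 c); auto. intros b Hb; apply Hc; auto.
      * intros b Hb. apply (cond_closed _ (proj1 (HT b Hb)) a0 c); auto. intros b' Hb'; apply Hc; auto.
    + intros x Hx. apply (club_ext (fun c => splits T0 (restr x c) /\ forall b, lt b a -> splits (T b) (restr x c))).
      * intros c. rewrite Hsp; auto. tauto.
      * apply club_inter. apply cond_branch; auto. intros c; apply Hx.
        intros b Hb. apply cond_branch. apply HT; auto. intros c; apply Hx; auto.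
  - intros t It. destruct (classic (splits T0 t /\ forall b, lt b a -> splits (T b) t)) as [[h1 h2]|h].
    + left; auto.
    + right. apply (Hnot t It h).
Qed.


Definition nf_ok (q : node -> Prop) (ch : node -> K) (t : node) : Prop :=
  q t /\ forall c, lt c (len t) -> ~ splits q (restr (ext z t) c) -> ext z t c = ch (restr (ext z t) c).

Lemma ext_restr x a c : lt c a -> ext z (restr x a) c = x c.
Proof. intros H. unfold ext. rewrite vals_restr_lt; auto. Qed.

Lemma nf_restr q ch x a : nf_ok q ch (restr x a) <->
  q (restr x a) /\ forall c, lt c a -> ~ splits q (restr x c) -> x c = ch (restr x c).
Proof.
  unfold nf_ok. rewrite len_restr. split; intros [H1 H2]; split; auto; intros c Hc.
  - rewrite <- (restr_restr x c a) by (apply lt_le; auto). rewrite <- (ext_restr x a c Hc) at 1. apply H2; auto.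
  - rewrite (restr_restr x c a) by (apply lt_le; auto). rewrite (ext_restr x a c Hc). apply H2; auto.
Qed.

Lemma nf_snoc q ch x a g : nf_ok q ch (restr x a) -> q (snoc (restr x a) g) ->
  (~ splits q (restr x a) -> g = ch (restr x a)) -> nf_ok q ch (snoc (restr x a) g).
Proof.
  intros H1 H2 H3. rewrite snoc_restr in *. apply nf_restr. apply nf_restr in H1 as [_ H1].
  split; auto. intros c Hc Hns. apply lt_sc_le in Hc. unfold upd.
  destruct (ltdec c a) as [h|h].
  - rewrite restr_eq with (y := x). apply H1; auto. rewrite restr_eq with (y := x) in Hns; auto.
    intros b Hb; unfold upd; destruct (ltdec b a); auto. exfalso; apply n; eapply lt_trans; eauto.
    intros b Hb; unfold upd; destruct (ltdec b a); auto. exfalso; apply n; eapply lt_trans; eauto.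
  - destruct Hc as [->|Hc]; [|tauto]. rewrite restr_upd in *. fold (upd x a g). rewrite restr_upd. auto.
Qed.

Lemma normalize q : cond q -> exists r, ncond r /\ (forall t, r t -> q t).
Proof.
  intros Cq. pose (ch := fun t => eps (fun g => q (snoc t g))).
  assert (Hch : forall t, q t -> q (snoc t (ch t))).
  { intros t Ht. apply (eps_spec (fun g => q (snoc t g))). apply cond_one_step; auto. }
  set (r := nf_ok q ch).
  assert (Hrq : forall t, r t -> q t) by (intros t H; apply H).
  assert (Hsucc : forall t g, r t -> splits q t -> q (snoc t g) -> r (snoc t g)).
  { intros t g Rt Hs Hq. destruct (node_restr t) as [x Ex]. rewrite Ex in *.
    apply nf_snoc; auto. tauto. }
  assert (Huniq : forall t g, r t -> ~ splits q t -> r (snoc t g) -> g = ch t).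
  { intros t g Rt Hns Rg. destruct (node_restr t) as [x Ex]. rewrite Ex in *.
    unfold r in Rg. rewrite snoc_restr in Rg. apply nf_restr in Rg as [_ Rg].
    specialize (Rg (len t) (lt_sc _)). unfold upd in Rg. destruct (ltdec (len t) (len t)) as [h|h].
    exfalso; eapply lt_irrefl; eauto. fold (upd x (len t) g) in Rg. rewrite restr_upd in Rg. apply Rg; auto. }
  assert (Hsp : forall t, r t -> (splits r t <-> splits q t)).
  { intros t Rt. split.
    - intros Hs. apply NNPP; intro Hns. apply (unique_not_split r t); auto.
      intros g g' H1 H2. rewrite (Huniq t g), (Huniq t g'); auto.
    - intros Hs. apply (club_ext (fun g => q (snoc t g))); auto. intros g. split; auto. }
  exists r. split; [split|]; auto.
  - apply cond_intro.
    + split. exists e0. unfold r, nf_ok. split. apply tree_e0, cond_tree; auto.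
      intros c Hc. exfalso. unfold e0 in Hc. rewrite len_restr in Hc. eapply le_not_lt. apply z_le. eauto.
      intros s t Hst Rt. destruct (node_restr t) as [x Ex]. rewrite Ex in Hst, Rt.
      apply prefix_iff in Hst as [Hl Es]. rewrite Es. unfold r in *. apply nf_restr in Rt as [R1 R2].
      apply nf_restr. split. eapply tree_restr; eauto. apply cond_tree; auto.
      intros c Hc. apply R2. eapply lt_le_trans; eauto.
    + intros s Rs. exists (snoc s (ch s)). split.
      * destruct (node_restr s) as [x Ex]. rewrite Ex in *. apply nf_snoc; auto.
      * split. apply prefix_snoc. rewrite len_snoc. intro E. apply (lt_irrefl (len s)). rewrite E at 2. apply lt_sc.
    + intros a0 c Hc Hchn u Hu. assert (q u).
      { apply (cond_closed _ Cq a0 c); auto. }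
      rewrite <- (restr_ext u). unfold r. apply nf_restr. rewrite restr_ext. split; auto.
      intros d Hd Hns. destruct Hu as [Hu1 Hu2]. destruct (Hu2 d Hd) as [b [Hb Hdb]].
      specialize (Hc b Hb). specialize (Hu1 b Hb). rewrite <- (restr_ext u) in Hu1.
      apply prefix_iff in Hu1 as [_ E]. unfold r in Hc. rewrite E in Hc. apply nf_restr in Hc.
      apply Hc; auto.
    + intros x Hx. apply (club_ext (fun c => splits q (restr x c))).
      * intros c. rewrite Hsp; auto. tauto.
      * apply cond_branch; auto.
  - intros t Rt. destruct (classic (splits q t)) as [h|h].
    + left. apply Hsp; auto.
    + right. intros g g' H1 H2. rewrite (Huniq t g), (Huniq t g'); auto.
Qed.


Lemma prefix_e0 t : prefix e0 t.
Proof.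
  split. apply z_le. intros b Hb. exfalso. unfold e0 in Hb. rewrite len_restr in Hb.
  eapply le_not_lt. apply z_le. eauto.
Qed.

Lemma snoc_prefix_val t g s : prefix (snoc t g) s -> vals s (len t) = Some g.
Proof.
  intros [_ H]. rewrite <- H by (rewrite len_snoc; apply lt_sc). unfold snoc.
  rewrite vals_restr_lt by apply lt_sc. unfold upd. destruct (ltdec (len t) (len t)); auto.
  exfalso; eapply lt_irrefl; eauto.
Qed.

Lemma comp_same_len (t s : node) : (prefix t s \/ prefix s t) -> len t = len s -> t = s.
Proof.
  intros [H|H] E. apply prefix_len_eq; auto. symmetry; apply prefix_len_eq; auto.
Qed.

Lemma avoid_step T s (Y : (K -> K) -> Prop) : ncond T -> T s -> nowhere_dense K lt Y ->
  exists r, ncond r /\ (forall t, r t -> T t) /\ r s /\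
    (forall y, (forall a, r (restr y a)) -> ~ Y y).
Proof.
  intros [CT NT] Ts HY.
  set (C := fun t => T t /\ (prefix t s \/ prefix s t)).
  assert (HCT : forall t, C t -> T t) by (intros t H; apply H).
  assert (Cge : forall t g, prefix s t -> (C (snoc t g) <-> T (snoc t g))).
  { intros t g H. split. apply HCT. intros H2. split; auto. right. eapply prefix_trans; eauto. apply prefix_snoc. }
  assert (Clt : forall t g, prefix t s -> lt (len t) (len s) -> C (snoc t g) -> vals s (len t) = Some g).
  { intros t g H1 H2 [_ [H3|H3]]. apply snoc_prefix_val; auto.
    assert (len s = len (snoc t g)).
    { apply le_antisym. apply H3. rewrite len_snoc. apply sc_least; auto. }
    rewrite (prefix_len_eq s (snoc t g)) by auto. apply snoc_prefix_val, prefix_refl. }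
  assert (Ccase : forall t, C t -> prefix s t \/ (prefix t s /\ lt (len t) (len s))).
  { intros t [_ [H|H]]; auto. destruct (proj1 H) as [E|Hl]; auto.
    left. rewrite (prefix_len_eq t s) by auto. apply prefix_refl. }
  assert (Cuniq : forall t, prefix t s -> lt (len t) (len s) ->
     forall g g', C (snoc t g) -> C (snoc t g') -> g = g').
  { intros t H1 H2 g g' G1 G2. apply Clt in G1; auto. apply Clt in G2; auto. congruence. }
  assert (condC : cond C).
  { apply cond_intro.
    - split. exists e0. split. apply tree_e0, cond_tree; auto. left; apply prefix_e0.
      intros t u Htu [Tu Hu]. split. eapply tree_prefix; eauto. apply cond_tree; auto.
      destruct Hu as [Hu|Hu]. left; eapply prefix_trans; eauto. apply (prefix_comparable t s u); auto.
    - intros t Ct. destruct (Ccase t Ct) as [H|[H1 H2]].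
      + destruct (cond_one_step T t CT (HCT t Ct)) as [g Hg]. exists (snoc t g). split.
        apply Cge; auto. split. apply prefix_snoc. rewrite len_snoc. intro E.
        apply (lt_irrefl (len t)). rewrite E at 2. apply lt_sc.
      + exists s. split. split; auto. left; apply prefix_refl. split; auto.
        intro E; rewrite E in H2; eapply lt_irrefl; eauto.
    - intros a0 c Hc Hch u Hu. split.
      + apply (cond_closed _ CT a0 c); try intros b Hb; try apply HCT; auto.
      + destruct (classic (exists b, lt b a0 /\ prefix s (c b))) as [[b [Hb Hsb]]|Hn].
        * right. eapply prefix_trans; eauto. apply Hu; auto.
        * left. assert (Hcs : forall b, lt b a0 -> prefix (c b) s).
          { intros b Hb. destruct (proj2 (Hc b Hb)) as [h|h]; auto. exfalso; eauto. }
          destruct Hu as [Hu1 Hu2]. split.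
          -- apply not_lt_le. intro Hl. destruct (Hu2 _ Hl) as [b [Hb Hlb]].
             apply (le_not_lt _ _ (proj1 (Hcs b Hb)) Hlb).
          -- intros d Hd. destruct (Hu2 d Hd) as [b [Hb Hdb]].
             rewrite <- (proj2 (Hu1 b Hb) d Hdb). apply (Hcs b Hb); auto.
    - intros x Hx.
      assert (Es : restr x (len s) = s).
      { apply comp_same_len. apply (Hx (len s)). apply len_restr. }
      apply (club_ext (fun c => splits T (restr x c) /\ le (len s) c)).
      + intros c. split.
        * intros [H1 H2]. assert (prefix s (restr x c)) by (rewrite <- Es; apply prefix_restr; auto).
          apply (club_ext (fun g => T (snoc (restr x c) g))); auto. intros g. rewrite Cge; tauto.
        * intros H. split. { apply (mono_split C T); [exact NT|exact HCT|apply HCT, Hx|exact H]. }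
          apply not_lt_le. intros Hl. apply (unique_not_split C (restr x c)); auto.
          apply Cuniq; auto. rewrite <- Es; apply prefix_restr, lt_le; auto.
      + apply club_inter2. apply cond_branch; auto. apply club_tail. }
  assert (normC : normal C).
  { intros t Ct. destruct (Ccase t Ct) as [H|[H1 H2]].
    - destruct (NT t (HCT t Ct)) as [h|h].
      + left. apply (club_ext (fun g => T (snoc t g))); auto. intros g; rewrite Cge; tauto.
      + right. intros g g' G1 G2. apply h; apply HCT; auto.
    - right. apply Cuniq; auto. }
  destruct (HY C condC) as [q [Cq [HqC Hqa]]].
  destruct (normalize q Cq) as [r [[Cr Nr] Hrq]].
  exists r. split; [split; auto|]. split. intros t Rt; apply HCT, HqC, Hrq; auto. split.
  - destruct (branch_exists' r e0) as [y [Hy _]]. apply cond_tree; auto. apply cond_pruned; auto.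
    apply cond_closed; auto. apply tree_e0, cond_tree; auto.
    rewrite branch_iff in Hy. assert (restr y (len s) = s).
    { apply comp_same_len. apply (HqC _ (Hrq _ (Hy (len s)))). apply len_restr. }
    rewrite <- H; auto.
  - intros y Hy. apply Hqa. apply branch_iff. intros a; apply Hrq; auto.
Qed.


Definition good (T : node -> Prop) (s : node) (Y : (K -> K) -> Prop) (r : node -> Prop) : Prop :=
  ncond r /\ (forall t, r t -> T t) /\ r s /\ (forall y, (forall a, r (restr y a)) -> ~ Y y).

Definition pick (T : node -> Prop) (s : node) (Y : (K -> K) -> Prop) : node -> Prop :=
  match excluded_middle_informative (exists r, good T s Y r) with
  | left H => proj1_sig (constructive_indefinite_description _ H)
  | right _ => T
  end.

Lemma pick_spec T s Y : (exists r, good T s Y r) -> good T s Y (pick T s Y).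
Proof.
  intros H. unfold pick. destruct (excluded_middle_informative _); [|tauto].
  destruct (constructive_indefinite_description _ e) as [r Hr]; auto.
Qed.

Lemma sc_eq_lt a b : a = sc b -> lt b a.
Proof. intros ->; apply lt_sc. Qed.

Lemma sc_inj a b : sc a = sc b -> a = b.
Proof.
  intros E. destruct (lt_tri a b) as [h|[h|h]]; auto; apply lt_sc_mono in h; rewrite E in h;
  exfalso; eapply lt_irrefl; eauto.
Qed.

Section Fusion.
Variable F : K -> (K -> K) -> Prop.
Variable p0 : node -> Prop.

Definition PhiF (x : K -> K) (a : K) (rec : forall b, lt b a -> node -> Prop) : node -> Prop :=
  match excluded_middle_informative (exists b, a = sc b) with
  | left H =>
      match constructive_indefinite_description _ H with
      | exist _ b Hb =>
          let T := rec b (sc_eq_lt a b Hb) in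
          if excluded_middle_informative (T (restr x a)) then pick T (restr x a) (F b) else T
      end
  | right _ => fun t => p0 t /\ forall b (h : lt b a), rec b h t
  end.

Definition Phi (x : K -> K) : K -> node -> Prop := Fix lt_wf (fun _ => node -> Prop) (PhiF x).

Lemma Phi_eq x a : Phi x a = PhiF x a (fun b _ => Phi x b).
Proof.
  unfold Phi. rewrite Fix_eq; auto. intros a0 f g H.
  assert (f = g). { apply functional_extensionality_dep; intro b. apply functional_extensionality_dep; intro h. auto. }
  subst; auto.
Qed.

Lemma Phi_succ x b : Phi x (sc b) =
  if excluded_middle_informative (Phi x b (restr x (sc b))) then pick (Phi x b) (restr x (sc b)) (F b) else Phi x b.
Proof.
  rewrite Phi_eq. unfold PhiF. destruct (excluded_middle_informative _) as [H|H].
  - destruct (constructive_indefinite_description _ H) as [b' Hb']. apply sc_inj in Hb'. subst b'. auto.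
  - exfalso; eauto.
Qed.

Lemma Phi_lim x a : (forall b, lt b a -> lt (sc b) a) ->
  Phi x a = fun t => p0 t /\ forall b, lt b a -> Phi x b t.
Proof.
  intros Hl. rewrite Phi_eq. unfold PhiF. destruct (excluded_middle_informative _) as [[b Hb]|H].
  - exfalso. assert (lt b a) by (subst; apply lt_sc). specialize (Hl b H). rewrite <- Hb in Hl.
    eapply lt_irrefl; eauto.
  - auto.
Qed.

Hypothesis HF : forall a, nowhere_dense K lt (F a).
Hypothesis Hp0 : ncond p0.

Lemma Phi_inv x a : ncond (Phi x a) /\ (forall t, Phi x a t -> p0 t) /\
  (forall c, le c a -> forall t, Phi x a t -> Phi x c t).
Proof.
  pattern a. apply (well_founded_ind lt_wf). clear a. intros a IH.
  destruct (ord_class a) as [[b ->]|Hl].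
  - destruct (IH b (lt_sc b)) as [N [P M]].
    rewrite Phi_succ. destruct (excluded_middle_informative _) as [Hin|Hout].
    + destruct (pick_spec (Phi x b) (restr x (sc b)) (F b)) as [Nr [Sr _]].
      { apply avoid_step; auto. }
      split; auto. split. intros t Ht; apply P, Sr; auto.
      intros c Hc t Ht. destruct Hc as [->|Hc].
      * rewrite Phi_succ. destruct (excluded_middle_informative _); tauto.
      * apply M. apply lt_sc_le; auto. apply Sr; auto.
    + split; auto. split; auto. intros c Hc t Ht. destruct Hc as [->|Hc].
      * rewrite Phi_succ. destruct (excluded_middle_informative _); tauto.
      * apply M; auto. apply lt_sc_le; auto.
  - rewrite Phi_lim; auto. split; [|split].
    + apply inter_ncond; auto. intros b Hb; apply IH; auto.
      intros b Hb t Ht. apply (IH b Hb); auto.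
      intros b b' H1 H2 t Ht. apply (IH b' H2); auto. apply lt_le; auto.
    + intros t [H _]; auto.
    + intros c Hc t [H1 H2]. destruct Hc as [->|Hc].
      * rewrite Phi_lim; auto.
      * auto.
Qed.

Lemma Phi_local x y a : (forall c, lt c a -> x c = y c) -> Phi x a = Phi y a.
Proof.
  revert x y. pattern a. apply (well_founded_ind lt_wf). clear a. intros a IH x y Hxy.
  destruct (ord_class a) as [[b ->]|Hl].
  - rewrite !Phi_succ. rewrite (IH b (lt_sc b) x y).
    rewrite (restr_eq x y (sc b)); auto.
    intros c Hc; apply Hxy. eapply lt_trans; eauto. apply lt_sc.
  - rewrite !Phi_lim; auto. apply functional_extensionality; intro t.
    apply propositional_extensionality. split; intros [H1 H2]; split; auto; intros b Hb.
    + rewrite <- (IH b Hb x y); auto. intros c Hc; apply Hxy; eapply lt_trans; eauto.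
    + rewrite (IH b Hb x y); auto. intros c Hc; apply Hxy; eapply lt_trans; eauto.
Qed.

Lemma Phi_self_succ y a : Phi y (sc a) (restr y (sc a)) <-> Phi y a (restr y (sc a)).
Proof.
  split.
  - intros H. apply (Phi_inv y (sc a)); auto. apply lt_le, lt_sc.
  - intros H. rewrite Phi_succ. destruct (excluded_middle_informative _); [|tauto].
    apply pick_spec. apply avoid_step; auto. apply Phi_inv.
Qed.

Definition qq (s : node) : Prop := Phi (ext z s) (len s) s.

Lemma qq_restr x a : qq (restr x a) <-> Phi x a (restr x a).
Proof.
  unfold qq. rewrite len_restr. rewrite (Phi_local (ext z (restr x a)) x a); [tauto|].
  intros c Hc. apply ext_restr; auto.
Qed.

Lemma qq_snoc x a g : qq (snoc (restr x a) g) <-> Phi x a (snoc (restr x a) g).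
Proof.
  rewrite snoc_restr, qq_restr, Phi_self_succ.
  rewrite (Phi_local (upd x a g) x a); [tauto|].
  intros c Hc; unfold upd; destruct (ltdec c a); tauto.
Qed.

Lemma qq_p0 s : qq s -> p0 s.
Proof. unfold qq; intros H. apply (Phi_inv (ext z s) (len s)); auto. Qed.

Lemma max_ex (b b' : K) : exists d, le b d /\ le b' d /\ (d = b \/ d = b').
Proof.
  destruct (lt_tri b b') as [h|[h|h]].
  exists b'. split. apply lt_le; auto. split. apply le_refl. auto.
  subst. exists b'. split. apply le_refl. split. apply le_refl. auto.
  exists b. split. apply le_refl. split. apply lt_le; auto. auto.
Qed.

Lemma qq_cond : cond qq.
Proof.
  assert (Htree : is_tree K lt qq).
  { split.
    - exists e0. unfold e0. apply qq_restr. apply (tree_e0 (Phi (fun _ => z) z)). apply cond_tree, Phi_inv.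
    - intros s t Hst Ht. destruct (node_restr t) as [x Ex]. rewrite Ex in Hst, Ht.
      apply prefix_iff in Hst as [Hl Es]. rewrite Es. apply qq_restr. apply qq_restr in Ht.
      apply (proj2 (proj2 (Phi_inv x (len t))) (len s) Hl) in Ht.
      apply (tree_restr _ x (len s) (len t)); auto. apply cond_tree, Phi_inv. }
  apply cond_intro; auto.
  - intros s Hs. destruct (node_restr s) as [x Ex]. rewrite Ex in Hs |- *.
    apply qq_restr in Hs. destruct (cond_one_step _ _ (proj1 (proj1 (Phi_inv x (len s)))) Hs) as [g Hg].
    exists (snoc (restr x (len s)) g). split. apply qq_snoc; auto. split. apply prefix_snoc.
    rewrite len_snoc. intro E. apply (lt_irrefl (len (restr x (len s)))). rewrite E at 2. apply lt_sc.
  - intros a0 c Hc Hch u Hu.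
    destruct (node_restr u) as [x Ex].
    assert (Hcx : forall b, lt b a0 -> c b = restr x (len (c b)) /\ le (len (c b)) (len u)).
    { intros b Hb. pose proof (proj1 Hu b Hb) as H. rewrite Ex in H. apply prefix_iff in H. tauto. }
    destruct (ord_class (len u)) as [[e He]|Hl].
    + destruct (proj2 Hu e) as [b [Hb Heb]]. rewrite He; apply lt_sc.
      assert (len (c b) = len u).
      { apply le_antisym. apply Hcx; auto. rewrite He. apply sc_least; auto. }
      rewrite <- (prefix_len_eq (c b) u); auto. apply Hu; auto.
    + assert (Hbelow : forall e b, lt e (len u) -> lt b (len u) -> Phi x e (restr x b)).
      { intros e b He Hb. destruct (max_ex e b) as [d [H1 [H2 H3]]].
        assert (lt d (len u)) by (destruct H3; subst; auto).
        destruct (proj2 Hu d H) as [j [Hj Hdj]].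
        destruct (Hcx j Hj) as [Ej _].
        assert (Qj' : Phi x e (restr x (len (c j)))).
        { apply (proj2 (proj2 (Phi_inv x (len (c j)))) e); [apply lt_le; eapply le_lt_trans; eauto|].
          apply qq_restr. rewrite <- Ej. apply Hc; auto. }
        apply (tree_restr _ x b (len (c j))); [apply cond_tree, Phi_inv| apply lt_le; eapply le_lt_trans; eauto | exact Qj']. }
      rewrite Ex. apply qq_restr. rewrite Phi_lim; auto. split.
      * apply closed_restr; auto. apply cond_closed, Hp0. intros b Hb.
        apply (Phi_inv x b); auto.
      * intros e He. apply closed_restr; auto. apply cond_closed, Phi_inv.
  - intros x Hx.
    assert (Px : forall a, Phi x a (restr x a)) by (intros a; apply qq_restr; auto).
    assert (Bx : forall b a, Phi x b (restr x a)).
    { intros b a. destruct (ltdec b a) as [h|h].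
      - apply (Phi_inv x a); auto. apply lt_le; auto.
      - eapply tree_restr. apply cond_tree, Phi_inv. apply not_lt_le; eauto. auto. }
    apply (club_ext (fun a => splits (Phi x a) (restr x a))).
    { intros a. unfold splits. split; apply club_ext; intros g; rewrite qq_snoc; tauto. }
    assert (Smono : forall b b' a, le b b' -> splits (Phi x b') (restr x a) -> splits (Phi x b) (restr x a)).
    { intros b b' a Hbb H. apply (mono_split (Phi x b')); auto. apply Phi_inv.
      apply (Phi_inv x b'); auto. }
    assert (Sp0 : forall b a, splits (Phi x b) (restr x a) -> splits p0 (restr x a)).
    { intros b a H. apply (mono_split (Phi x b)); auto. apply Hp0. apply (Phi_inv x b).
      apply (Phi_inv x b); auto. }
    assert (Hlim : forall L, (exists b, lt b L) ->
       (forall b b', lt b L -> lt b' L -> exists c, lt b' c /\ lt c L /\ splits (Phi x b) (restr x c)) ->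
       splits (Phi x L) (restr x L)).
    { intros L HL H.
      assert (Hl : forall b, lt b L -> lt (sc b) L).
      { intros b Hb. destruct (H b b Hb Hb) as [c [H1 [H2 _]]]. eapply le_lt_trans; eauto. apply sc_least; auto. }
      unfold splits. rewrite Phi_lim; auto.
      apply (club_inter L (fun g => p0 (snoc (restr x L) g)) (fun b g => Phi x b (snoc (restr x L) g))).
      - apply (proj2 (cond_branch p0 x (proj1 Hp0) (fun a => proj1 (proj2 (Phi_inv x a)) _ (Px a)))); auto.
        intros b' Hb'. destruct (H b' b' Hb' Hb') as [c [H1 [H2 H3]]]. exists c. split; auto. split; auto.
        eapply Sp0; eauto.
      - intros b Hb. apply (proj2 (cond_branch (Phi x b) x (proj1 (proj1 (Phi_inv x b))) (Bx b))); auto. }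
    split.
    + intros a0.
      pose (nx := fun c => eps (fun e => lt c e /\ splits (Phi x c) (restr x e))).
      assert (Hnx : forall c, lt c (nx c) /\ splits (Phi x c) (restr x (nx c))).
      { intros c. apply (eps_spec (fun e => lt c e /\ splits (Phi x c) (restr x e))).
        apply club_gt. apply cond_branch. apply Phi_inv. apply Bx. }
      pose (d := fun n => Nat.iter n nx a0).
      destruct (least _ (omega_bound d)) as [L [HL HLl]].
      assert (Hkey : forall b', lt b' L -> exists n, le b' (d n)).
      { intros b' Hb'. apply NNPP; intro Hn. assert (forall n, lt (d n) b').
        { intros n. apply NNPP; intro h. apply Hn. exists n. apply not_lt_le; auto. }
        apply (le_not_lt _ _ (HLl _ H) Hb'). }
      exists L. split. apply lt_le, (HL O). apply Hlim. exists (d O); auto.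
      intros b b' Hb Hb'. destruct (max_ex b b') as [m [H1 [H2 H3]]].
      assert (lt m L) by (destruct H3; subst; auto).
      destruct (Hkey m H) as [n Hn]. exists (d (S n)). split.
      eapply le_lt_trans. eapply le_trans; eauto. apply (Hnx (d n)). split. apply HL.
      apply (Smono b (d n)). eapply le_trans; eauto. apply (Hnx (d n)).
    + intros L HL Hc. apply Hlim; auto. intros b b' Hb Hb'.
      destruct (max_ex b b') as [m [H1 [H2 H3]]].
      assert (lt m L) by (destruct H3; subst; auto).
      destruct (Hc m H) as [c [Hmc [HcL Hs]]]. exists c. split. eapply le_lt_trans; eauto. split; auto.
      apply (Smono b c). apply lt_le. eapply le_lt_trans; eauto. auto.
Qed.

Lemma qq_avoid x : (forall a, qq (restr x a)) -> forall b, ~ F b x.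
Proof.
  intros Hx b. assert (Px : forall a, Phi x a (restr x a)) by (intros a; apply qq_restr; auto).
  assert (Bx : forall c a, Phi x c (restr x a)).
  { intros c a. destruct (ltdec c a) as [h|h].
    - apply (Phi_inv x a); auto. apply lt_le; auto.
    - eapply tree_restr. apply cond_tree, Phi_inv. apply not_lt_le; eauto. auto. }
  assert (Hin : Phi x b (restr x (sc b))) by apply Bx.
  pose proof (Bx (sc b)) as Bs. rewrite Phi_succ in Bs.
  destruct (excluded_middle_informative _) as [h|h]; [|tauto].
  destruct (pick_spec (Phi x b) (restr x (sc b)) (F b)) as [_ [_ [_ Ha]]].
  { apply avoid_step; auto. apply Phi_inv. }
  apply Ha; auto.
Qed.

End Fusion.

Lemma main_fusion (F : K -> (K -> K) -> Prop) : (forall a, nowhere_dense K lt (F a)) ->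
  forall p, cond p -> exists q, cond q /\ (forall s, q s -> p s) /\
    (forall x, branch K lt q x -> forall b, ~ F b x).
Proof.
  intros HF p Cp. destruct (normalize p Cp) as [p0 [Hp0 Hsub]].
  exists (qq F p0). split. apply qq_cond; auto. split.
  intros s Hs. apply Hsub. eapply qq_p0; eauto.
  intros x Hx. apply (qq_avoid F p0); auto. apply branch_iff; auto.
Qed.

End Main.

Theorem mainTheorem6 (K : Type) (lt : K -> K -> Prop)
  (Hwo : is_wellorder K lt) (Hcard : is_cardinal_type K lt)
  (Hunc : is_uncountable K) (Hreg : is_regular K lt)
  (Hpow : two_lt_kappa_eq_kappa K lt) :
  forall X : (K -> K) -> Prop, nowhere_dense K lt X <-> in_ideal K lt X.
Proof.
  intros X. split.
  - intros H. exists (fun _ => X). split; auto. intros x Hx. destruct (K_inh K Hunc) as [k]. exists k; auto.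
  - intros [F [HF HX]] p Cp. destruct (main_fusion K lt Hwo Hunc Hreg F HF p Cp) as [q [Cq [Hqp Hqa]]].
    exists q. split; auto. split; auto. intros x Hx HXx. destruct (HX x HXx) as [b Hb].
    apply (Hqa x Hx b Hb).
Qed.
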